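(* Let $n,m$ be positive integers, $\mu_1=\min(n,m)$, $\mu_2=\max(n,m)$. Then \[ P_n^m(g)=W_{\mu_1}(g)\quad\text{for } 0\le g\le \mu_2, \] and \[ P_n^m(g)=W_n(g)+W_m(g)-W_{n+m}(g)\quad\text{for } \mu_2\le g\le n+m . \]
   Context: For positive integers $n,m$ and an integer $s\ge 0$, $P_n^m(s)$ denotes the number of tuples $(x_1,\dots,x_m)$ of non-negative integers satisfying $\sum_{r=1}^m r\,x_r=s$ and $\sum_{r=1}^m x_r\le n$. Equivalently, $P_n^m(s)$ is the coefficient of $t^s$ in the Gaussian polynomial $G(n,m;t)=\frac{\prod_{i=1}^{n+m}(1-t^i)}{\prod_{u=1}^{n}(1-t^u)\prod_{v=1}^{m}(1-t^v)}=\sum_{s=0}^{nm}P_n^m(s)t^s$. For a positive integer $k$ and integer $s\ge0$, $W_k(s)$ denotes the number of partitions of $s$ into parts from $\{1,\dots,k\}$, i.e. the coefficient of $t^s$ in $\prod_{i=1}^k\frac{1}{1-t^i}=\sum_{s\ge0}W_k(s)t^s$; in particular $W_k(0)=1$. *)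

(* Defs.v *)
From mathcomp Require Import all_boot all_order all_algebra.
Set Implicit Arguments. Unset Strict Implicit. Unset Printing Implicit Defensive.

(* A tuple (x_1,...,x_m) of non-negative integers is encoded as
   x : {ffun 'I_m -> 'I_s.+1}, with x_r = x (r-1).  The bound x_r <= s is
   automatic whenever sum_r r*x_r = s (since r >= 1), so no tuple is lost. *)

Definition P (n m s : nat) : nat :=
  #|[set x : {ffun 'I_m -> 'I_s.+1} |
      (\sum_(i < m) i.+1 * x i == s) && (\sum_(i < m) (x i : nat) <= n)]|.

(* W_k(s) = number of partitions of s into parts from {1..k}, i.e.
   #{ (y_1..y_k) >= 0 : sum_r r y_r = s } (y_r = multiplicity of part r). *)
Definition W (k s : nat) : nat :=
  #|[set y : {ffun 'I_k -> 'I_s.+1} | \sum_(i < k) i.+1 * y i == s]|.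

(* Main.v *)
Require Import Defs.
From mathcomp Require Import all_boot all_order all_algebra.
From mathcomp Require Import zify.
Import GRing.Theory.
Set Implicit Arguments. Unset Strict Implicit. Unset Printing Implicit Defensive.

Lemma card_bij (T U : finType) (A : {set T}) (B : {set U}) (f : T -> U) (g : U -> T) :
  {in A, forall a, f a \in B} -> {in B, forall b, g b \in A} ->
  {in A, cancel f g} -> {in B, cancel g f} -> #|A| = #|B|.
Proof.
move=> fA gB fK gK; apply/eqP; rewrite eqn_leq; apply/andP; split.
  rewrite -(card_in_imset (can_in_inj fK)); apply: subset_leq_card.
  by apply/subsetP => _ /imsetP [a Ha ->]; exact: fA.
rewrite -(card_in_imset (can_in_inj gK)); apply: subset_leq_card.
by apply/subsetP => _ /imsetP [a Ha ->]; exact: gB.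
Qed.

Lemma cardlt n c : c <= n -> #|[set k : 'I_n | k < c]| = c.
Proof.
move=> hc; rewrite -sum1_card.
rewrite (eq_bigl (fun k : 'I_n => k < c)); last by move=> k; rewrite inE.
by rewrite -(big_ord_widen n (fun _ => 1)) // sum1_card card_ord.
Qed.

Lemma cardA n m (A : {set 'I_n * 'I_m}) :
  #|A| = \sum_(j < m) #|[set i : 'I_n | (i, j) \in A]|.
Proof.
rewrite -sum1_card.
rewrite (eq_bigr (fun j : 'I_m => \sum_(i : 'I_n) if (i, j) \in A then 1 else 0)); last first.
  by move=> j _; rewrite -sum1_card big_mkcond /=; apply: eq_bigr => i _; rewrite inE.
rewrite big_mkcond /= exchange_big pair_big /=.
by apply: eq_bigr => [[i j]] _.
Qed.

Definition PS n m s := [set x : {ffun 'I_m -> 'I_s.+1} |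
      (\sum_(i < m) i.+1 * x i == s) && (\sum_(i < m) (x i : nat) <= n)].

Lemma PE n m s : P n m s = #|PS n m s|. Proof. by []. Qed.

Lemma sum_le_wsum m s (x : {ffun 'I_m -> 'I_s.+1}) :
  \sum_(i < m) (x i : nat) <= \sum_(i < m) i.+1 * x i.
Proof. by apply: leq_sum => i _; rewrite leq_pmull. Qed.

Lemma L1 N k g : g <= N -> P N k g = W k g.
Proof.
move=> h; rewrite /P /W; apply: eq_card => x; rewrite !inE.
case: eqP => //= e; apply: leq_trans (sum_le_wsum x) _; by rewrite e.
Qed.

Definition ferrers n m (A : {set 'I_n * 'I_m}) :=
  [forall p : 'I_n * 'I_m, forall q : 'I_n * 'I_m, (p \in A) ==> (q.1 <= p.1) ==> (q.2 <= p.2) ==> (q \in A)].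

Lemma ferrersP n m (A : {set 'I_n * 'I_m}) :
  reflect (forall p q : 'I_n * 'I_m, p \in A -> q.1 <= p.1 -> q.2 <= p.2 -> q \in A) (ferrers A).
Proof.
apply: (iffP forallP) => [h p q pA h1 h2|h p].
  by move: (h p) => /forallP /(_ q); rewrite pA h1 h2.
by apply/forallP => q; apply/implyP => pA; apply/implyP => h1; apply/implyP; exact: h.
Qed.

Definition FS n m s := [set A : {set 'I_n * 'I_m} | ferrers A && (#|A| == s)].

Definition trs n m (A : {set 'I_n * 'I_m}) : {set 'I_m * 'I_n} :=
  [set p | (p.2, p.1) \in A].

Lemma FS_sym n m s : #|FS n m s| = #|FS m n s|.
Proof.
have trK n' m' : cancel (@trs n' m') (@trs m' n').
  by move=> A; apply/setP => [[i j]]; rewrite !inE.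
have trC n' m' (A : {set 'I_n' * 'I_m'}) : #|trs A| = #|A|.
  apply: (card_bij (f := fun p => (p.2, p.1)) (g := fun p => (p.2, p.1))).
  - by move=> [i j]; rewrite inE.
  - by move=> [i j] h; rewrite inE.
  - by move=> [i j].
  - by move=> [i j].
have trF n' m' (A : {set 'I_n' * 'I_m'}) : ferrers A -> ferrers (trs A).
  move=> /ferrersP h; apply/ferrersP => p q; rewrite !inE => pA h1 h2.
  exact: (h _ _ pA).
apply: (card_bij (f := @trs n m) (g := @trs m n)).
- by move=> A; rewrite !inE => /andP [fA cA]; rewrite trF // trC.
- by move=> A; rewrite !inE => /andP [fA cA]; rewrite trF // trC.
- by move=> A _; rewrite trK.
- by move=> A _; rewrite trK.
Qed.

Definition ys m (z : 'I_m -> nat) (j : nat) := \sum_(i < m | j <= i) z i.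

Lemma ys_ge m (z : 'I_m -> nat) j : m <= j -> ys z j = 0.
Proof.
move=> h; rewrite /ys big_pred0 // => i; apply/negbTE; rewrite -ltnNge.
exact: leq_trans (ltn_ord i) h.
Qed.

Lemma ys_rec m (z : 'I_m -> nat) (j : 'I_m) : ys z j = z j + ys z j.+1.
Proof.
rewrite /ys (bigD1 j) //=; congr (_ + _); apply: eq_bigl => i.
by rewrite ltn_neqAle andbC eq_sym.
Qed.

Lemma ys_anti m (z : 'I_m -> nat) j j' : j <= j' -> ys z j' <= ys z j.
Proof.
move=> h; rewrite /ys [X in _ <= X]big_mkcond [X in X <= _]big_mkcond /=.
apply: leq_sum => i _; case: ifP => // h'; by rewrite (leq_trans h h').
Qed.

Lemma ys0 m (z : 'I_m -> nat) : ys z 0 = \sum_(i < m) z i.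
Proof. by []. Qed.

Lemma ys_sum m (z : 'I_m -> nat) : \sum_(j < m) ys z j = \sum_(i < m) i.+1 * z i.
Proof.
rewrite /ys.
rewrite (eq_bigr (fun j : 'I_m => \sum_(i < m) if j <= i then z i else 0)); last first.
  by move=> j _; rewrite big_mkcond.
rewrite exchange_big /=; apply: eq_bigr => i _.
rewrite -big_mkcond /= sum_nat_const; congr (_ * _).
rewrite -[RHS](cardlt (ltn_ord i)); apply: eq_card => j; rewrite !inE.
by rewrite ltnS.
Qed.

Lemma tel1 (c : nat -> nat) k : (forall j, c j.+1 <= c j) ->
  \sum_(j < k) (c j - c j.+1) + c k = c 0.
Proof.
move=> h; elim: k => [|k IH]; first by rewrite big_ord0.
rewrite big_ord_recr /= -addnA subnK //.
Qed.

Lemma tel2 (c : nat -> nat) k : (forall j, c j.+1 <= c j) ->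
  \sum_(j < k) j.+1 * (c j - c j.+1) + k * c k = \sum_(j < k) c j.
Proof.
move=> h; elim: k => [|k IH]; first by rewrite !big_ord0.
rewrite !big_ord_recr -IH /=; have := h k.
set a := c k; set b := c k.+1; set S := \sum_(i < k) _; nia.
Qed.

Lemma ys_tel m (c : nat -> nat) : (forall j, c j.+1 <= c j) -> (forall j, m <= j -> c j = 0) ->
  forall j, ys (fun i : 'I_m => c i - c i.+1) j = c j.
Proof.
move=> h h0 j; move: {2}(m - j) (erefl (m - j)) => d; elim: d j => [|d IH] j e.
  by rewrite ys_ge ?h0 //; lia.
have hj : j < m by lia.
rewrite (ys_rec _ (Ordinal hj)) /= IH ?subnK //; lia.
Qed.

Definition colc n m (A : {set 'I_n * 'I_m}) (j : nat) :=
  \sum_(j' < m | j' == j :> nat) #|[set i : 'I_n | (i, j') \in A]|.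

Lemma colcE n m (A : {set 'I_n * 'I_m}) (j : 'I_m) : colc A j = #|[set i : 'I_n | (i, j) \in A]|.
Proof. by rewrite /colc (big_pred1 j). Qed.

Lemma colc_ge n m (A : {set 'I_n * 'I_m}) j : m <= j -> colc A j = 0.
Proof.
move=> h; rewrite /colc big_pred0 // => i; apply/negbTE; apply/eqP => e.
by move: (ltn_ord i); rewrite e ltnNge h.
Qed.

Lemma colc_le_n n m (A : {set 'I_n * 'I_m}) j : colc A j <= n.
Proof.
case: (ltnP j m) => h; last by rewrite colc_ge.
by rewrite (colcE A (Ordinal h)); apply: leq_trans (max_card _) _; rewrite card_ord.
Qed.

Lemma colc_sum n m (A : {set 'I_n * 'I_m}) : \sum_(j < m) colc A j = #|A|.
Proof. by rewrite cardA; apply: eq_bigr => j _; rewrite colcE. Qed.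

Lemma colc_le_card n m (A : {set 'I_n * 'I_m}) j : colc A j <= #|A|.
Proof.
case: (ltnP j m) => h; last by rewrite colc_ge.
by rewrite -colc_sum (bigD1 (Ordinal h)) //= leq_addr.
Qed.

Lemma colc_anti n m (A : {set 'I_n * 'I_m}) j : ferrers A -> colc A j.+1 <= colc A j.
Proof.
move=> /ferrersP fA; case: (ltnP j.+1 m) => h; last by rewrite (colc_ge A h).
rewrite (colcE A (Ordinal h)) (colcE A (Ordinal (ltnW h))).
apply: subset_leq_card; apply/subsetP => i; rewrite !inE => hA.
by apply: (fA _ _ hA) => //=; apply: leqnSn.
Qed.

Lemma prefixS n (S : {set 'I_n}) : (forall a b : 'I_n, b <= a -> a \in S -> b \in S) ->
  forall i : 'I_n, (i \in S) = (i < #|S|).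
Proof.
move=> hS i; case: (boolP (i \in S)) => iS.
  apply/esym; rewrite -(cardlt (ltn_ord i)); apply: subset_leq_card.
  by apply/subsetP => k; rewrite inE ltnS => hk; exact: hS hk iS.
apply/esym/negbTE; rewrite -leqNgt -[X in _ <= X](cardlt (ltnW (ltn_ord i))).
apply: subset_leq_card; apply/subsetP => k kS; rewrite inE ltnNge; apply/negP => hk.
by move: iS; rewrite (hS _ _ hk kS).
Qed.

Lemma colc_mem n m (A : {set 'I_n * 'I_m}) (i : 'I_n) (j : 'I_m) : ferrers A ->
  ((i, j) \in A) = (i < colc A j).
Proof.
move=> /ferrersP fA; rewrite colcE -(prefixS (S := [set i0 | (i0, j) \in A])) ?inE //.
move=> a b hab; rewrite !inE => hA; exact: (fA _ _ hA).
Qed.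

Definition toF n m s (x : {ffun 'I_m -> 'I_s.+1}) : {set 'I_n * 'I_m} :=
  [set p : 'I_n * 'I_m | p.1 < ys (fun i => (x i : nat)) p.2].

Definition toX n m s (A : {set 'I_n * 'I_m}) : {ffun 'I_m -> 'I_s.+1} :=
  [ffun j : 'I_m => inord (colc A j - colc A j.+1)].

Lemma P_F n m s : P n m s = #|FS n m s|.
Proof.
rewrite PE.
apply: (card_bij (f := @toF n m s) (g := @toX n m s)).
- move=> x; rewrite !inE => /andP [/eqP e hn].
  have yle j : ys (fun i => (x i : nat)) j <= n.
    by apply: leq_trans (ys_anti _ (leq0n j)) _; rewrite ys0.
  apply/andP; split.
    apply/ferrersP => p q; rewrite !inE => hp h1 h2.
    apply: leq_trans (ys_anti _ h2); exact: leq_ltn_trans h1 hp.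
  rewrite cardA; apply/eqP.
  transitivity (\sum_(j < m) ys (fun i => (x i : nat)) j); last by rewrite ys_sum.
  apply: eq_bigr => j _.
  rewrite -[RHS](cardlt (yle j)); apply: eq_card => i; by rewrite !inE.
- move=> A; rewrite !inE => /andP [fA /eqP cA].
  have anti := fun j => colc_anti j fA.
  have xE (j : 'I_m) : (toX s A j : nat) = colc A j - colc A j.+1.
    rewrite ffunE inordK // ltnS; apply: leq_trans (leq_subr _ _) _.
    by rewrite -cA colc_le_card.
  apply/andP; split.
    rewrite (eq_bigr (fun j : 'I_m => j.+1 * (colc A j - colc A j.+1))); last first.
      by move=> j _; rewrite xE.
    have := tel2 m anti; rewrite colc_ge // muln0 addn0 => ->.
    by rewrite colc_sum cA.
  rewrite (eq_bigr (fun j : 'I_m => (colc A j - colc A j.+1))); last first.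
    by move=> j _; rewrite xE.
  have := tel1 m anti; rewrite colc_ge // addn0 => ->; exact: colc_le_n.
- move=> x; rewrite !inE => /andP [/eqP e hn].
  have yle j : ys (fun i => (x i : nat)) j <= n.
    by apply: leq_trans (ys_anti _ (leq0n j)) _; rewrite ys0.
  have cE j : colc (toF n x) j = ys (fun i => (x i : nat)) j.
    case: (ltnP j m) => h; last by rewrite colc_ge // ys_ge.
    rewrite (colcE _ (Ordinal h)) -[RHS](cardlt (yle j)); apply: eq_card => i.
    by rewrite !inE.
  apply/ffunP => j; rewrite ffunE !cE ys_rec addnK; exact: inord_val.
- move=> A; rewrite !inE => /andP [fA /eqP cA].
  have anti := fun j => colc_anti j fA.
  have xE (j : 'I_m) : (toX s A j : nat) = colc A j - colc A j.+1.
    rewrite ffunE inordK // ltnS; apply: leq_trans (leq_subr _ _) _.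
    by rewrite -cA colc_le_card.
  apply/setP => [[i j]]; rewrite inE /= colc_mem //.
  have -> : ys (fun i => (toX s A i : nat)) j = ys (fun i : 'I_m => colc A i - colc A i.+1) j.
    by rewrite /ys; apply: eq_bigr => k _; rewrite xE.
  rewrite ys_tel // => k; exact: colc_ge.
Qed.

Lemma P_sym n m s : P n m s = P m n s.
Proof. by rewrite !P_F FS_sym. Qed.

Definition QS n K k s := [set x : {ffun 'I_K -> 'I_s.+1} |
  [&& \sum_(i < K) i.+1 * x i == s, \sum_(i < K) (x i : nat) <= n &
      [forall i : 'I_K, (k <= i) ==> (x i == ord0)]]].

Lemma sum_restr K k (hk : k <= K) (F : 'I_K -> nat) :
  (forall j : 'I_K, k <= j -> F j = 0) ->
  \sum_(j < K) F j = \sum_(i < k) F (widen_ord hk i).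
Proof.
move=> h; rewrite (bigID (fun j : 'I_K => j < k)) /= [X in _ + X]big1 ?addn0.
  exact: big_ord_narrow.
by move=> j; rewrite -leqNgt; exact: h.
Qed.

Definition ext K k s (x : {ffun 'I_k -> 'I_s.+1}) : {ffun 'I_K -> 'I_s.+1} :=
  [ffun j : 'I_K => odflt ord0 (omap x (insub (val j) : option 'I_k))].

Lemma extW K k s (hk : k <= K) (x : {ffun 'I_k -> 'I_s.+1}) i :
  ext K x (widen_ord hk i) = x i.
Proof.
rewrite ffunE /=; case: insubP => [u _ e|]; last by rewrite ltn_ord.
by congr (x _); apply: val_inj.
Qed.

Lemma ext0 K k s (x : {ffun 'I_k -> 'I_s.+1}) (j : 'I_K) : k <= j -> ext K x j = ord0.
Proof.
move=> h; rewrite ffunE; case: insubP => [u hu _|] //=.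
by move: hu; rewrite ltnNge h.
Qed.

Lemma R n K k s : k <= K -> #|QS n K k s| = P n k s.
Proof.
move=> hk; rewrite PE; apply/esym.
apply: (card_bij (f := @ext K k s) (g := fun y => [ffun i : 'I_k => y (widen_ord hk i)])).
- move=> x; rewrite !inE => /andP [e hn].
  rewrite (@sum_restr _ _ hk (fun j => j.+1 * ext K x j)); last first.
    by move=> j h; rewrite ext0 // muln0.
  rewrite (@sum_restr _ _ hk (fun j => (ext K x j : nat))); last first.
    by move=> j h; rewrite ext0.
  under eq_bigr => i _ do rewrite extW.
  have e2 : \sum_(i < k) (ext K x (widen_ord hk i) : nat) = \sum_(i < k) (x i : nat).
    by apply: eq_bigr => i _; rewrite extW.
  rewrite e2.
  rewrite hn /=; apply/andP; split; first exact: e.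
  apply/forallP => j; apply/implyP => h; by rewrite ext0.
- move=> y; rewrite !inE => /and3P [e hn /forallP h0].
  have z (j : 'I_K) : k <= j -> (y j : nat) = 0.
    by move=> hj; move: (h0 j); rewrite hj => /eqP ->.
  rewrite (@sum_restr _ _ hk (fun j => j.+1 * y j)) in e; last first.
    by move=> j hj; rewrite z // muln0.
  rewrite (@sum_restr _ _ hk (fun j => (y j : nat))) in hn; last exact: z.
  apply/andP; split.
    by rewrite (eq_bigr (fun i : 'I_k => i.+1 * y (widen_ord hk i))) // => i _; rewrite ffunE.
  by rewrite (eq_bigr (fun i : 'I_k => (y (widen_ord hk i) : nat))) // => i _; rewrite ffunE.
- by move=> x _; apply/ffunP => i; rewrite ffunE extW.
- move=> y; rewrite !inE => /and3P [e hn /forallP h0].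
  apply/ffunP => j; case: (ltnP j k) => h.
    have -> : j = widen_ord hk (Ordinal h) by apply: val_inj.
    by rewrite extW ffunE.
  by rewrite ext0 //; move: (h0 j); rewrite h => /eqP ->.
Qed.

Theorem theorem2 (n m : nat) (hn : 0 < n) (hm : 0 < m) :
  (forall g : nat, g <= maxn n m -> P n m g = W (minn n m) g) /\
  (forall g : nat, maxn n m <= g <= n + m ->
     ((P n m g)%:Z = (W n g)%:Z + (W m g)%:Z - (W (n + m) g)%:Z)%R).
Proof.
split.
  move=> g hg; case: (leqP m n) => hmn.
    by rewrite L1 //; lia.
  by rewrite P_sym L1 //; lia.
move=> g /andP [h1 h2].
have hng : n <= g by lia.
have hU : W (n + m) g = #|PS g (n + m) g| by rewrite -PE L1.
have hA : #|QS g (n + m) m g| = W m g by rewrite R ?leq_addl // L1.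
have hB : #|PS n (n + m) g| = W n g by rewrite -PE P_sym L1 //; lia.
have hI : QS g (n + m) m g :&: PS n (n + m) g = QS n (n + m) m g.
  apply/setP => x; rewrite !inE.
  case: (_ == g) => //=; case: [forall _, _]; rewrite ?andbT ?andbF //=.
  by case: (boolP (_ <= n)) => h; rewrite ?andbT ?andbF ?(leq_trans h hng).
have hUn : QS g (n + m) m g :|: PS n (n + m) g = PS g (n + m) g.
  apply/setP => x; rewrite !inE.
  case: (boolP (_ == g)) => //= /eqP e.
  case: (boolP (_ <= n)) => h; first by rewrite orbT (leq_trans h hng).
  rewrite orbF; case: (boolP (_ <= g)) => //= _.
  apply/forallP => i; apply/implyP => hi; apply/negPn/negP => hx.
  have hx1 : 0 < (x i : nat) by rewrite lt0n; move: hx; apply: contra => /eqP hx; apply/eqP/val_inj.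
  have split : \sum_(j < n + m) j.+1 * x j = \sum_(j < n + m) (x j : nat) + \sum_(j < n + m) j * x j.
    by rewrite -big_split; apply: eq_bigr => j _; rewrite mulSn.
  have hi2 : i * x i <= \sum_(j < n + m) j * x j by rewrite (bigD1 i) //= leq_addr.
  move: e h; rewrite split => e h.
  have : m <= i * x i by apply: leq_trans (leq_pmulr _ hx1).
  have h3 : n < \sum_(j < n + m) (x j : nat) by rewrite ltnNge.
  lia.
have := cardsUI (QS g (n + m) m g) (PS n (n + m) g).
rewrite hUn hI hA hB -hU R ?leq_addl // => e.
apply/eqP; rewrite eq_sym subr_eq -!PoszD; apply/eqP; congr Posz; lia.
Qed.
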